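(* Let $T$ be a finite rooted tree with root $P$ and exactly $n \ge 1$ non-root nodes, and set $k^* = \lfloor (n-1)/2 \rfloor$. Then $$\mathrm{IDI}(T) \le (1 + k^* )(n - k^* ).$$ This bound is attained by the following tree. Take a path $P \to p_1 \to \dots \to p_{k^*}$. Then attach $n - k^*$ leaves as children of $p_{k^*}$, or as children of $P$ if $k^* = 0$. More generally, for $0 \le k \le n-1$, let $T_k$ be the tree consisting of a path $P \to p_1 \to \dots \to p_k$ together with $n-k$ leaves attached as children of the last path node ($p_k$, or $P$ if $k=0$). Then $\mathrm{IDI}(T_k) = k(n-k) + (n-k) = (k+1)(n-k)$, and $k^*$ maximizes $(k+1)(n-k)$ over integers $0 \le k \le n-1$.
   Context: For a finite rooted tree $T$ with root $P$, a leaf is a node with no children. The Influence Dispersion Index is $\mathrm{IDI}(T) = \sum_{\ell \in L(T)} \mathrm{dist}(P,\ell)$, where $L(T)$ is the set of leaves of $T$ and $\mathrm{dist}(P,\ell)$ is the number of edges on the path from $P$ to $\ell$. The paper writes the maximizer as $k = \lfloor (n-1)/2 \rceil$, meaning $(n-1)/2$ rounded to an integer. Either rounding gives the same value of $(1+k)(n-k)$. *)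

(* Defs.v *)
From mathcomp Require Import all_boot.
Set Implicit Arguments. Unset Strict Implicit. Unset Printing Implicit Defensive.

Inductive rtree : Type := Node of seq rtree.

(* Total number of nodes (root included). *)
Fixpoint nnodes (t : rtree) : nat :=
  let: Node ts := t in (sumn (map nnodes ts)).+1.

Fixpoint leaf_depths (t : rtree) : seq nat :=
  match t with
  | Node [::] => [:: 0]
  | Node ts => map S (flatten (map leaf_depths ts))
  end.

Definition IDI (t : rtree) : nat := sumn (leaf_depths t).

Definition star (m : nat) : rtree := Node (nseq m (Node [::])).

Definition Tk (n k : nat) : rtree := iter k (fun t => Node [:: t]) (star (n - k)).

Definition kstar (n : nat) : nat := (n - 1)./2.

(* Main.v *)
Require Import Defs.
From mathcomp Require Import all_boot.
From mathcomp Require Import zify.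

Lemma sumn_mapS s : sumn (map S s) = sumn s + size s.
Proof. elim: s => //= a s ->; lia. Qed.

Lemma sumn_le_bound s h : all (fun x => x <= h) s -> sumn s <= size s * h.
Proof. elim: s => //= a s IH /andP[Ha Hs]; move: (IH Hs); lia. Qed.

Lemma key N t : nnodes t <= N -> exists h,
  all (fun x => x <= h) (leaf_depths t) /\ size (leaf_depths t) + h <= nnodes t.
Proof.
elim: N t => [[ts] //|N IH [ts]] /= Hn.
case: ts Hn => [|t0 ts] Hn; first by exists 0.
set s := t0 :: ts.
rewrite -/s in Hn *.
suff [h [Ha Hs]] : exists h, all (fun x => x <= h) (flatten (map leaf_depths s))
   /\ size (flatten (map leaf_depths s)) + h <= sumn (map nnodes s).
  exists h.+1; split.
    by rewrite all_map; apply: sub_all Ha => x /=.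
  rewrite size_map; lia.
have Hn' : sumn (map nnodes s) <= N by lia.
elim: s Hn' {Hn} => [|u us IHu] /= Hn; first by exists 0.
have [hu [Hau Hsu]] := IH u ltac:(lia).
have [hs [Has Hss]] := IHu ltac:(lia).
exists (maxn hu hs); split.
  rewrite all_cat; apply/andP; split.
    by apply: sub_all Hau => x /= Hx; rewrite leq_max Hx.
  by apply: sub_all Has => x /= Hx; rewrite leq_max Hx orbT.
rewrite size_cat; lia.
Qed.

Lemma quad {n k} : 1 <= n -> k <= n -> (k + 1) * (n - k) <= (kstar n + 1) * (n - kstar n).
Proof.
rewrite /kstar => Hn Hk.
have := odd_double_half (n - 1).
move: (odd (n-1)) ((n-1)./2) => r q.
case: r => /= Hq.
- have -> : n - q = q + 2 by lia.
  have -> : n = 2 * q + 2 by lia.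
  have E : k <= q \/ q < k by lia.
  case: E => E; nia.
- have -> : n - q = q + 1 by lia.
  have -> : n = 2 * q + 1 by lia.
  have E : k <= q \/ q < k by lia.
  case: E => E; nia.
Qed.

Lemma nnodes_iter k t : nnodes (iter k (fun t => Node [:: t]) t) = nnodes t + k.
Proof. elim: k => [|k IH] /=; first by rewrite addn0. rewrite addn0 IH; lia. Qed.

Lemma nnodes_star m : nnodes (star m) = m.+1.
Proof. rewrite /star /=; congr S; elim: m => //= m ->; by []. Qed.

Lemma nnodes_Tk n k : k <= n -> nnodes (Tk n k) = n.+1.
Proof. move=> Hk; rewrite /Tk nnodes_iter nnodes_star; lia. Qed.

Lemma ld_Tk n k : k < n -> leaf_depths (Tk n k) = nseq (n - k) k.+1.
Proof.
move=> Hk; rewrite /Tk.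
have Hs : forall m, 0 < m -> leaf_depths (star m) = nseq m 1.
  case=> // m _; rewrite /star /=; congr (_ :: _).
  by elim: m => //= m ->.
have : 0 < n - k by lia.
move: (n - k) => m Hm0.
elim: k {Hk} => [|k IH]; first exact: Hs.
rewrite iterS.
change (map S (leaf_depths (iter k (fun t => Node [:: t]) (star m)) ++ [::]) = nseq m k.+2).
by rewrite cats0 IH map_nseq.
Qed.

Theorem mainTheorem5 (n : nat) (hn : 1 <= n) :
  (* upper bound for every rooted tree with n non-root nodes *)
  (forall T : rtree, nnodes T = n.+1 ->
     IDI T <= (1 + kstar n) * (n - kstar n))
  (* the bound is attained by T_{k*} *)
  /\ nnodes (Tk n (kstar n)) = n.+1
  /\ IDI (Tk n (kstar n)) = (1 + kstar n) * (n - kstar n)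
  (* the family T_k, 0 <= k <= n-1 *)
  /\ (forall k : nat, k <= n - 1 ->
        [/\ nnodes (Tk n k) = n.+1,
            IDI (Tk n k) = k * (n - k) + (n - k),
            k * (n - k) + (n - k) = (k + 1) * (n - k)
          & (k + 1) * (n - k) <= (kstar n + 1) * (n - kstar n)]).
Proof.
have Hks : kstar n < n by rewrite /kstar; lia.
have IDIk : forall k, k < n -> IDI (Tk n k) = k * (n - k) + (n - k).
  move=> k Hk; rewrite /IDI ld_Tk //.
  elim: (n - k) => [|m IHm] /=; [lia | rewrite IHm; lia].
split.
  move=> T HT.
  have [h [Ha Hs]] := @key _ T (leqnn (nnodes T)).
  rewrite HT in Hs.
  rewrite /IDI; apply: leq_trans (sumn_le_bound _ _ Ha) _.
  case: h Ha Hs => [|h] _ Hs; first by rewrite muln0.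
  have Hh : h <= n by lia.
  have Hq := quad hn Hh.
  rewrite addnC; apply: leq_trans _ Hq.
  rewrite addn1 mulnC leq_mul2l; apply/orP; right; lia.
split; first by apply: nnodes_Tk; lia.
split; first by rewrite IDIk //; lia.
move=> k Hk; split.
- apply: nnodes_Tk; lia.
- apply: IDIk; lia.
- lia.
- apply: quad => //; lia.
Qed.
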